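(* Let $X$ be an $S^{\ast}$-well-filtered space and $Y$ a retract of $X$, i.e. there are continuous maps $f:X\to Y$ and $g:Y\to X$ with $f\circ g=\mathrm{id}_Y$. Then $Y$ is $S^{\ast}$-well-filtered. In particular, if a product $\prod_{i\in I}X_i$ of $T_0$-spaces is $S^{\ast}$-well-filtered, then each $X_i$ is $S^{\ast}$-well-filtered.
   Context: All spaces are $T_0$. The specialization order of $X$ is given by $x\le y$ iff $x\in cl(\{y\})$; ${\uparrow}$ is taken with respect to it; a subset is saturated if it is an upper set in the specialization order. $K(X)$ denotes the set of all nonempty compact saturated subsets of $X$; a family in $K(X)$ is filtered if any two members contain a common member. $X$ is $S^{\ast}$-well-filtered if for every filtered family $\{K_i\mid i\in I\}\subseteq K(X)$, every $G\in K(X)$ and every nonempty open $U$, $\bigcap_{i\in I}K_i\cap G\subseteq U$ implies $K_i\cap G\subseteq U$ for some $i$. *)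

(* Defs.v *)
From HB Require Import structures.
From mathcomp Require Import all_boot all_order.
From mathcomp Require Import boolp classical_sets topology separation_axioms.
Set Implicit Arguments. Unset Strict Implicit. Unset Printing Implicit Defensive.
Local Open Scope classical_set_scope.

Section SWF.
Context {X : topologicalType}.

Definition spec_le (x y : X) : Prop := closure [set y] x.

Definition saturated (A : set X) : Prop :=
  forall x y, A x -> spec_le x y -> A y.

Definition KX (A : set X) : Prop := A !=set0 /\ compact A /\ saturated A.

Definition filtered_KX (I : Type) (K : I -> set X) : Prop :=
  [/\ inhabited I, (forall i, KX (K i)) &
      (forall i j, exists k, K k `<=` K i /\ K k `<=` K j)].

End SWF.

Definition S_star_well_filtered (X : topologicalType) : Prop :=
  forall (I : Type) (K : I -> set X), filtered_KX K ->
  forall G : set X, KX G ->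
  forall U : set X, open U -> U !=set0 ->
  (\bigcap_(i in setT) K i) `&` G `<=` U -> exists i, K i `&` G `<=` U.

(* Main.v *)
Require Import Defs.
From HB Require Import structures.
From mathcomp Require Import all_boot all_order.
From mathcomp Require Import mathcomp_extra boolp classical_sets topology separation_axioms.
Local Open Scope classical_set_scope.

Section Helpers.
Context {X : topologicalType}.

Lemma open_up (U : set X) (x y : X) : open U -> U x -> spec_le x y -> U y.
Proof.
move=> oU Ux cl.
have [z [/= -> //]] := cl U (open_nbhs_nbhs (conj oU Ux)).
Qed.

Definition upc (B : set X) := [set x | exists2 b, B b & spec_le b x].

Lemma spec_trans (x y z : X) : spec_le x y -> spec_le y z -> spec_le x z.
Proof.
move=> hxy hyz V nV.
have [w [/= -> Vy]] := hxy _ (nbhs_interior nV).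
have [u [/= -> Vz]] := hyz _ (open_nbhs_nbhs (conj (@open_interior _ V) Vy)).
by exists z; split => //; apply: interior_subset.
Qed.

Lemma spec_refl (x : X) : spec_le x x.
Proof. by move=> V nV; exists x; split => //; apply: nbhs_singleton. Qed.

Lemma upc_sat B : saturated (upc B).
Proof. by move=> x y [b Bb bx] xy; exists b => //; apply: spec_trans bx xy. Qed.

Lemma upc_compact B : compact B -> compact (upc B).
Proof.
move=> cB F PF Fu.
pose G := filter_from F (fun C => B `&` [set b | exists2 c, C c & spec_le b c]).
have FG : Filter G.
  apply: filter_from_filter; first by exists setT; apply: filterT.
  move=> C1 C2 F1 F2; exists (C1 `&` C2); first exact: filterI.
  by move=> b [Bb [c [c1 c2] bc]]; split; split => //; exists c.
have PG : ProperFilter G.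
  apply: filter_from_proper => // C FC.
  have [c [[b Bb bc] Cc]] := filter_ex (filterI Fu FC).
  by exists b; split => //; exists c.
have GB : G B by exists setT; [apply: filterT | move=> b []].
have [b [Bb clb]] := cB G PG GB.
exists b; split; first by exists b => //; apply: spec_refl.
move=> C V FC nV.
have GC : G (B `&` [set b | exists2 c, C c & spec_le b c]) by exists C.
have [b' [[_ [c Cc b'c]] Vb']] := clb _ _ GC (nbhs_interior nV).
exists c; split => //; apply: interior_subset.
exact: (open_up _ _ _ (open_interior V) Vb' b'c).
Qed.

End Helpers.

Lemma cont_spec (X Y : topologicalType) (f : X -> Y) (x y : X) :
  continuous f -> spec_le x y -> spec_le (f x) (f y).
Proof.
move=> fc hxy B nB.
have := fc x B nB => /= h.
have [z [/= -> fz]] := hxy _ h.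
by exists (f y).
Qed.

Lemma retract_swf (X Y : topologicalType) :
     S_star_well_filtered X ->
     forall (f : X -> Y) (g : Y -> X),
       continuous f -> continuous g -> (forall y, f (g y) = y) ->
       S_star_well_filtered Y.
Proof.
move=> sX f g fc gc fg I K [inhI KK Kf] G [[y0 Gy0] [cG sG]] U oU [u Uu] hU.
have KXup : forall A : set Y, KX A -> KX (upc (g @` A)).
  move=> A [[a Aa] [cA sA]]; split; first by exists (g a); exists (g a);
    [exists a | apply: spec_refl].
  split; last exact: upc_sat.
  apply: upc_compact; apply: continuous_compact => //.
  exact: continuous_subspaceT.
have upS : forall A B : set Y, A `<=` B -> upc (g @` A) `<=` upc (g @` B).
  by move=> A B AB x [_ [a Aa <-] ax]; exists (g a) => //; exists a => //; apply: AB.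
have back : forall A : set Y, saturated A -> forall x, upc (g @` A) x -> A (f x).
  move=> A sA x [_ [a Aa <-] ax]; apply: (sA a) => //.
  by rewrite -[X in spec_le X _]fg; apply: cont_spec.
have fK : filtered_KX (fun i => upc (g @` K i)).
  split => // [i|i j]; first exact: KXup.
  by have [k [ki kj]] := Kf i j; exists k; split; apply: upS.
have := sX I _ fK _ (KXup G (conj (ex_intro _ y0 Gy0) (conj cG sG)))
  (f @^-1` U) (open_comp (fun x _ => fc x) oU).
case.
- by exists (g u); rewrite /= fg.
- move=> x [hx Gx]; apply: hU; split; last exact: back.
  move=> i _; apply: back; first by have [_ [_ ?]] := KK i.
  exact: hx.
move=> i hi; exists i => y [Ky Gy].
have := hi (g y); rewrite /= fg; apply; split.
  by exists (g y); [exists y | apply: spec_refl].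
by exists (g y); [exists y | apply: spec_refl].
Qed.

Theorem mainTheorem16 :
  (forall (X Y : topologicalType),
     kolmogorov_space X -> kolmogorov_space Y ->
     S_star_well_filtered X ->
     forall (f : X -> Y) (g : Y -> X),
       continuous f -> continuous g -> (forall y, f (g y) = y) ->
       S_star_well_filtered Y)
  /\
  (forall (I : Type) (T : I -> topologicalType),
     (forall i, kolmogorov_space (T i)) ->
     (forall i, inhabited (T i)) ->
     S_star_well_filtered (prod_topology T) ->
     forall i, S_star_well_filtered (T i)).
Proof.
split; first by move=> X Y _ _; exact: retract_swf.
move=> I T _ inh sP i.
pose I' := {classic I}.
pose T' : I' -> topologicalType := T.
have p : forall j : I', T' j.
  move=> j; have e : exists x : T' j, True by case: (inh j) => x; exists x.
  exact: (proj1_sig (cid e)).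
apply: (@retract_swf (prod_topology T') (T' i) sP (@proj I' T' i) (@dfwith I' T' p i)).
- exact: proj_continuous.
- exact: dfwith_continuous.
- by move=> y; rewrite projK.
Qed.
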